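(* Let $K$ be a Cantor set and let $G$ be a nonempty full subgraph of $\mathscr{C}(K)$ which is invariant under the action of $\mathrm{Homeo}(K)$ (given by $f(U\sqcup V)=f(U)\sqcup f(V)$). Then $G$, with its own graph metric, has diameter exactly $2$.
   Context: A cut of a Stone space $X$ (compact, Hausdorff, totally disconnected) is an unordered partition of $X$ into two disjoint clopen sets $U,V$, written $U\sqcup V$; it is non-peripheral if each of $U,V$ contains at least two points. Two cuts $U\sqcup V$, $U'\sqcup V'$ cross if all four sets $U\cap U'$, $U\cap V'$, $V\cap U'$, $V\cap V'$ are nonempty; otherwise they are compatible. The complex of cuts $\mathscr{C}(X)$ is the simplicial graph whose vertices are the non-peripheral cuts of $X$, with edges between distinct compatible cuts. A full subgraph is an induced subgraph on a subset of the vertices. *)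

(* Defs.v *)
From HB Require Import structures.
From mathcomp Require Import all_boot all_order all_algebra.
From mathcomp Require Import all_classical all_reals all_analysis.
Set Implicit Arguments. Unset Strict Implicit. Unset Printing Implicit Defensive.
Local Open Scope classical_set_scope.

Definition homeo (S T : topologicalType) (f : S -> T) : Prop :=
  continuous f /\ exists g : T -> S, [/\ cancel f g, cancel g f & continuous g].

(* A cut of X, as an unordered pair {U, V} of disjoint clopen sets covering X;
   necessarily V = ~` U. It is represented as the set of its two blocks. *)
Definition is_cut (T : topologicalType) (C : set (set T)) : Prop :=
  exists U : set T, clopen U /\ C = [set W | W = U \/ W = ~` U].

Definition nonperipheral (T : topologicalType) (C : set (set T)) : Prop :=
  forall W, C W -> exists x y, [/\ x <> y, W x & W y].

Definition cut_vertex (T : topologicalType) (C : set (set T)) : Prop :=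
  is_cut C /\ nonperipheral C.

Definition cross (T : topologicalType) (C D : set (set T)) : Prop :=
  forall W W', C W -> D W' -> W `&` W' !=set0.

Definition cut_adj (T : topologicalType) (C D : set (set T)) : Prop :=
  C <> D /\ ~ cross C D.

Definition cut_image (T : topologicalType) (f : T -> T) (C : set (set T))
  : set (set T) := (fun W => f @` W) @` C.

(* full subgraph of C(T) on vertex set G (G must consist of vertices) *)
Definition full_subgraph (T : topologicalType) (G : set (set (set T))) : Prop :=
  G `<=` [set C | cut_vertex C].

Definition homeo_invariant (T : topologicalType) (G : set (set (set T))) : Prop :=
  forall f : T -> T, homeo f -> forall C, G C -> G (cut_image f C).

Definition walk_in (T : topologicalType) (G : set (set (set T)))
  (n : nat) (C D : set (set T)) : Prop :=
  exists s : nat -> set (set T),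
    [/\ s 0%N = C, s n = D, (forall i, (i <= n)%N -> G (s i))
      & (forall i, (i < n)%N -> cut_adj (s i) (s i.+1))].

Definition dist_le (T : topologicalType) (G : set (set (set T)))
  (n : nat) (C D : set (set T)) : Prop :=
  exists2 k, (k <= n)%N & walk_in G k C D.

Definition diameter_eq (T : topologicalType) (G : set (set (set T))) (n : nat)
  : Prop :=
  (forall C D, G C -> G D -> dist_le G n C D) /\
  (exists C D, [/\ G C, G D & ~ dist_le G n.-1 C D]).

(* Main.v *)
Require Import Defs.
From HB Require Import structures.
From mathcomp Require Import all_boot all_order all_algebra.
From mathcomp Require Import all_classical all_reals all_analysis.
From mathcomp Require Import Rstruct.
Set Implicit Arguments. Unset Strict Implicit. Unset Printing Implicit Defensive.
Local Open Scope classical_set_scope.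

Lemma zd_hausdorff (T : topologicalType) : zero_dimensional T -> hausdorff_space T.
Proof.
move=> zd; rewrite open_hausdorff => x y xy.
have [V [[oV cV] Vx nVy]] := zd _ _ xy.
exists (V, ~` V) => /=; first by split; apply: mem_set.
split => //; first exact: closed_openC.
by apply/eqP; rewrite setICr.
Qed.

Section Embed.
Variable R : realType.
Variable U : set cantor_space.
Hypothesis clU : clopen U.
Variable x0 : cantor_space.
Hypothesis Ux0 : U x0.
Definition ST := {x : cantor_space | x \in U}.
Definition st0 : ST := exist _ x0 (mem_set Ux0).
HB.instance Definition _ := Choice.on ST.
HB.instance Definition _ := isPointed.Build ST st0.
Definition valST : ST -> cantor_space := val.
Definition SS := initial_topology valST.
HB.instance Definition _ := Pointed.on SS.
HB.instance Definition _ := Uniform.on SS.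
HB.instance Definition _ : @PseudoMetric R _ := @PseudoMetric.on SS.

Lemma valST_cont : continuous (valST : SS -> cantor_space).
Proof. exact: initial_continuous. Qed.

Lemma SS_zd : zero_dimensional SS.
Proof.
move=> x y xy.
have vxy : valST x != valST y.
  by apply: contra xy => /eqP h; apply/eqP; apply: val_inj.
have [V [clV Vx nVy]] := cantor_zero_dimensional vxy.
exists (valST @^-1` V); split => //.
exact: preimage_clopen clV valST_cont.
Qed.

Lemma SS_perfect : perfect_set [set: SS].
Proof.
apply/perfectTP => x [A oA hA].
have e : [set valST x] = A `&` U.
  apply/seteqP; split => y.
    move=> -> ; split; last exact: set_mem (valP x).
    by have : (valST @^-1` A) x by rewrite hA.
  move=> [Ay Uy].
  have : (valST @^-1` A) (exist _ y (mem_set Uy)) by [].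
  by rewrite hA /= => <-.
apply: (perfectTP.1 cantor_perfect (valST x)); rewrite e.
apply: openI => //; exact: clU.1.
Qed.

Definition retr (y : cantor_space) : SS :=
  match pselect (U y) with left h => exist _ y (mem_set h) | right _ => st0 end.

Lemma retr_cont : continuous retr.
Proof.
apply: continuous_comp_initial; apply/continuousP => A oA.
have -> : (valST \o retr) @^-1` A = (A `&` U) `|` (~` U `&` (fun _ => A x0)).
  apply/seteqP; split => y; rewrite /retr /=; case: pselect => h /=.
  - by move=> Ay; left.
  - by move=> Ax0; right.
  - by case=> [[]|[]].
  - by case=> [[]|[]].
apply: openU; first by apply: openI => //; exact: clU.1.
apply: openI; first exact: closed_openC clU.2.
case: (pselect (A x0)) => h.
  by rewrite (_ : (fun _ => A x0) = setT); [exact: openT | apply/seteqP; split].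
by rewrite (_ : (fun _ => A x0) = set0); [exact: open0 | apply/seteqP; split].
Qed.

Lemma SS_compact : compact [set: SS].
Proof.
have -> : [set: SS] = retr @` setT.
  apply/seteqP; split => // s _; exists (valST s) => //.
  rewrite /retr; case: pselect => h; first by apply: val_inj.
  by exfalso; apply: h; exact: set_mem (valP s).
apply: continuous_compact; first exact/continuous_subspaceT/retr_cont.
exact: cantor_space_compact.
Qed.

Lemma SS_cantor_like : cantor_like SS.
Proof.
split; [exact: SS_perfect | exact: SS_compact | exact: zd_hausdorff SS_zd | exact: SS_zd].
Qed.

Lemma embed_ex : exists h : cantor_space -> cantor_space,
  [/\ continuous h, injective h & forall y, U y <-> exists c, h c = y].
Proof.
have [f [cf _]] := homeomorphism_cantor_like SS_cantor_like.
exists (valST \o f); split.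
- by move=> x; apply: continuous_comp; [exact: cf | exact: valST_cont].
- move=> a b /= e0.
  have e : f a = f b by apply: val_inj.
  have K := @funK _ _ _ f.
  rewrite -(K a) ?in_setT //; transitivity (f^-1 (f b)).
    by congr (f^-1 _); exact: e.
  by apply: K; rewrite in_setT.
- move=> y; split.
    move=> Uy; exists (f^-1 (retr y)); rewrite /= invK ?in_setT //.
    by rewrite /retr; case: pselect.
  by case=> c <-; exact: set_mem (valP (f c)).
Qed.
End Embed.


Lemma cont_into_cantor (X : topologicalType) (f : X -> cantor_space) :
  (forall n, continuous (fun x => f x n)) -> continuous f.
Proof.
move=> hf x.
apply/(@cvg_sup _ _ (fun i => Topological.class
    (initial_topology (fun g : (nat -> bool) => g i))) _ (f x)) => i.
have := @continuous_comp_initial _ X _ (fun g : (nat -> bool) => g i) f (hf i) x.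
by [].
Qed.

Definition Lc : set cantor_space := [set x | x 0%N = true].

Lemma Lc_clopen : clopen Lc.
Proof.
have -> : Lc = (proj 0%N : cantor_space -> bool) @^-1` [set true] by [].
apply: preimage_clopen; last exact: proj_continuous.
by split; [exact: discrete_open | exact: discrete_closed].
Qed.

Definition ctail (x : cantor_space) : cantor_space := fun n => x n.+1.
Definition ccons (b : bool) (c : cantor_space) : cantor_space :=
  fun n => if n is k.+1 then c k else b.

Lemma ctail_cont : continuous ctail.
Proof. by apply: cont_into_cantor => n; exact: (@proj_continuous _ _ n.+1). Qed.

Lemma homeo_inv_cont (F Fi : cantor_space -> cantor_space) :
  continuous F -> cancel F Fi -> cancel Fi F -> continuous Fi.
Proof.
move=> cF FK FiK; apply/continuous_closedP => A clA.
have -> : Fi @^-1` A = F @` A.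
  apply/seteqP; split => y.
    by move=> Ay; exists (Fi y) => //; rewrite FiK.
  by case=> x Ax <-; rewrite /= FK.
apply: (compact_closed cantor_space_hausdorff).
apply: continuous_compact; first exact/continuous_subspaceT.
apply: (subclosed_compact clA cantor_space_compact) => //.
Qed.

Lemma homog_cantor (R : realType) (U : set cantor_space) : clopen U ->
  U !=set0 -> (~` U) !=set0 ->
  exists F Fi : cantor_space -> cantor_space,
  [/\ continuous F, continuous Fi, cancel F Fi, cancel Fi F
    & forall x, U (F x) <-> x 0%N = true].
Proof.
move=> clU [u Uu] [v Vv].
have [h1 [c1 i1 r1]] := embed_ex R clU Uu.
have [h2 [c2 i2 r2]] := embed_ex R (clopenC U clU) Vv.
pose F : cantor_space -> cantor_space := fun x => if x 0%N then h1 (ctail x) else h2 (ctail x).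
have FU x : U (F x) <-> x 0%N = true.
  rewrite /F; case: (x 0%N); split => // h.
    by apply: (r1 _).2; exists (ctail x).
  by have : (~` U) (h2 (ctail x)) by apply: (r2 _).2; exists (ctail x).
have Fsurj y : exists x, F x = y.
  case: (pselect (U y)) => Uy.
    have [c hc] := (r1 y).1 Uy; exists (ccons true c); exact: hc.
  have [c hc] := (r2 y).1 Uy; exists (ccons false c); exact: hc.
have Finj : injective F.
  move=> a b e.
  have ha := FU a; have hb := FU b; rewrite e in ha.
  have e0 : a 0%N = b 0%N.
    case: (a 0%N) (b 0%N) ha hb => [] [] ha hb //.
      by have := (ha.2 erefl); move/hb.
    by have := (hb.2 erefl); move/ha.
  have et : ctail a = ctail b.
    move: e; rewrite /F e0; case: (b 0%N) => e; [exact: i1 | exact: i2].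
  apply: funext => -[|n] //; exact: (congr1 (fun c => c n) et).
have [Fi FiK] := choice Fsurj.
have cF : continuous F.
  apply/continuousP => A oA.
  have -> : F @^-1` A = (Lc `&` ctail @^-1` (h1 @^-1` A)) `|`
                         (~` Lc `&` ctail @^-1` (h2 @^-1` A)).
    apply/seteqP; split => x; rewrite /F /Lc /=; case: (x 0%N).
    - by left.
    - by right.
    - by case=> [[]|[]].
    - by case=> [[]|[]].
  have cL := Lc_clopen.
  apply: openU; apply: openI.
  - exact: cL.1.
  - have : continuous (h1 \o ctail) by move=> x; apply: continuous_comp; [exact: ctail_cont|exact: c1].
    by move/continuousP; apply.
  - exact: closed_openC cL.2.
  - have : continuous (h2 \o ctail) by move=> x; apply: continuous_comp; [exact: ctail_cont|exact: c2].
    by move/continuousP; apply.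
exists F, Fi; split => //.
- exact: homeo_inv_cont cF (fun x => Finj _ _ (FiK (F x))) FiK.
- by move=> x; apply: Finj; rewrite FiK.
Qed.


Definition cutof (T : Type) (A : set T) : set (set T) := [set W | W = A \/ W = ~` A].

Lemma cutofC (T : Type) (A : set T) : cutof (~` A) = cutof A.
Proof.
apply/seteqP; split => W [->|->]; rewrite /cutof ?setCK; by [right|left].
Qed.

Lemma image_can (T : Type) (f g : T -> T) (A : set T) :
  cancel f g -> cancel g f -> f @` A = g @^-1` A.
Proof.
move=> fK gK; apply/seteqP; split => y.
  by case=> x Ax <-; rewrite /= fK.
by move=> Ay; exists (g y) => //; rewrite gK.
Qed.

Lemma cut_image_bij (T : topologicalType) (f g : T -> T) (A : set T) :
  cancel f g -> cancel g f -> cut_image f (cutof A) = cutof (g @^-1` A).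
Proof.
move=> fK gK; rewrite /cut_image.
have e1 := image_can A fK gK; have e2 := image_can (~` A) fK gK.
apply/seteqP; split => W.
  by case=> B [->|->] <-; [left; rewrite e1 | right; rewrite e2].
case=> ->; [exists A; [by left | exact: e1] | exists (~` A); [by right | exact: e2]].
Qed.

Lemma adj_sub (T : topologicalType) (U W : set T) :
  W `<=` U -> W !=set0 -> (exists z, U z /\ ~ W z) ->
  cut_adj (cutof U) (cutof W) /\ cut_adj (cutof W) (cutof U).
Proof.
move=> WU [x Wx] [z [Uz nWz]].
have neq : cutof U <> cutof W.
  move=> e; have : cutof W U by rewrite -e; left.
  case=> e'; first by apply: nWz; rewrite -e'.
  by have := WU _ Wx; rewrite e' => /(_ Wx).
split; split.
- exact: neq.
- move=> cr; have [p [nUp Wp]] := cr (~` U) W (or_intror erefl) (or_introl erefl).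
  exact: nUp (WU _ Wp).
- exact/nesym.
- move=> cr; have [p [Wp nUp]] := cr W (~` U) (or_introl erefl) (or_intror erefl).
  exact: nUp (WU _ Wp).
Qed.

Lemma vertex_cutof (T : topologicalType) (W : set T) : clopen W ->
  (exists x y, [/\ x <> y, W x & W y]) ->
  (exists x y, [/\ x <> y, (~` W) x & (~` W) y]) -> cut_vertex (cutof W).
Proof.
move=> clW h1 h2; split; first by exists W.
by move=> B [->|->].
Qed.


Lemma three_pts (O : set cantor_space) : open O -> O !=set0 ->
  exists x y z, [/\ O x, O y, O z & [/\ x <> y, x <> z & y <> z]].
Proof.
move=> oO nO.
have [x [y [Ox Oy xy]]] := (perfectTP_ex.1 cantor_perfect) O oO nO.
have [V [[oV cV] Vx nVy]] := cantor_zero_dimensional xy.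
have oO' : open (O `&` ~` V) by apply: openI => //; exact: closed_openC.
have [y' [z [[Oy' nVy'] [Oz nVz] yz]]] :=
  (perfectTP_ex.1 cantor_perfect) _ oO' (ex_intro _ y (conj Oy nVy)).
exists x, y', z; split => //; split.
- by move=> e; apply: nVy'; rewrite -e.
- by move=> e; apply: nVz; rewrite -e.
- exact/eqP.
Qed.

Section KSec.
Variable K : topologicalType.
Variables (phi : K -> cantor_space) (psi : cantor_space -> K).
Hypotheses (cphi : continuous phi) (cpsi : continuous psi)
  (K1 : cancel phi psi) (K2 : cancel psi phi).

Lemma K_zd (x z : K) : x <> z -> exists A : set K, [/\ clopen A, A x & ~ A z].
Proof.
move=> xz; have : phi x != phi z by apply/eqP => /(can_inj K1).
move/cantor_zero_dimensional => [V [clV Vx nVz]].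
by exists (phi @^-1` V); split => //; exact: preimage_clopen.
Qed.

Lemma K_three (P : set K) : open P -> P !=set0 ->
  exists x y z, [/\ P x, P y, P z & [/\ x <> y, x <> z & y <> z]].
Proof.
move=> oP [p Pp].
have oP' : open (psi @^-1` P) by move/continuousP : cpsi; apply.
have nP' : (psi @^-1` P) !=set0 by exists (phi p); rewrite /= K1.
have [x [y [z [Px Py Pz [xy xz yz]]]]] := three_pts oP' nP'.
exists (psi x), (psi y), (psi z); split => //; split.
- by move/(can_inj K2).
- by move/(can_inj K2).
- by move/(can_inj K2).
Qed.

Definition LKof : set K := phi @^-1` Lc.

Lemma homogK (U : set K) : clopen U -> U !=set0 -> (~` U) !=set0 ->
  exists H Hi : K -> K, [/\ homeo H, homeo Hi, cancel H Hi, cancel Hi H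
    & forall k, U (H k) <-> LKof k].
Proof.
move=> clU [u Uu] [v Vv].
have clU' : clopen (psi @^-1` U) := preimage_clopen clU cpsi.
have n1 : (psi @^-1` U) !=set0 by exists (phi u); rewrite /= K1.
have n2 : (~` (psi @^-1` U)) !=set0 by exists (phi v); rewrite /= K1.
have [F [Fi [cF cFi FK FiK hF]]] := homog_cantor Rdefinitions.R clU' n1 n2.
have cH : continuous (psi \o F \o phi).
  move=> x; apply: continuous_comp; first exact: cphi.
  by apply: continuous_comp; [exact: cF | exact: cpsi].
have cHi : continuous (psi \o Fi \o phi).
  move=> x; apply: continuous_comp; first exact: cphi.
  by apply: continuous_comp; [exact: cFi | exact: cpsi].
have c1 : cancel (psi \o F \o phi) (psi \o Fi \o phi) by move=> k /=; rewrite K2 FK K1.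
have c2 : cancel (psi \o Fi \o phi) (psi \o F \o phi) by move=> k /=; rewrite K2 FiK K1.
exists (psi \o F \o phi), (psi \o Fi \o phi); split => //.
- by split => //; exists (psi \o Fi \o phi); split.
- by split => //; exists (psi \o F \o phi); split.
- by move=> k; exact: hF (phi k).
Qed.
End KSec.

Unset Implicit Arguments.

Theorem mainTheorem4 (K : topologicalType)
  (hK : exists phi : K -> cantor_space, homeo phi)
  (G : set (set (set K)))
  (hfull : full_subgraph G)
  (hne : G !=set0)
  (hinv : homeo_invariant G) :
  diameter_eq G 2.
Proof.
case: hK => phi [cphi [psi [K1 K2 cpsi]]].
have allG : forall U, clopen U -> U !=set0 -> (~` U) !=set0 -> G (cutof U).
  have [C0 GC0] := hne.
  have [[U0 [clU0 eC0]] np0] := hfull _ GC0.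
  have [a [b [_ U0a _]]] : exists x y, [/\ x <> y, U0 x & U0 y].
    by apply: np0; rewrite eC0; left.
  have [c [d [_ U0c _]]] : exists x y, [/\ x <> y, (~` U0) x & (~` U0) y].
    by apply: np0; rewrite eC0; right.
  have [H0 [H0i [hH0 hH0i K01 K02 pH0]]] :=
    homogK cphi cpsi K1 K2 clU0 (ex_intro _ a U0a) (ex_intro _ c U0c).
  have GL : G (cutof (LKof phi)).
    have := hinv _ hH0i _ GC0; rewrite eC0.
    have -> : cut_image H0i [set W | W = U0 \/ W = ~` U0] = cutof (H0 @^-1` U0).
      exact: (cut_image_bij U0 K02 K01).
    have -> : H0 @^-1` U0 = LKof phi.
      by apply/seteqP; split => k /pH0.
    done.
  move=> U clU nU nCU.
  have [H [Hi [hH hHi KH1 KH2 pH]]] := homogK cphi cpsi K1 K2 clU nU nCU.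
  have := hinv _ hH _ GL; rewrite (cut_image_bij _ KH1 KH2).
  have -> : Hi @^-1` (LKof phi) = U.
    apply/seteqP; split => k /=.
      by move/pH; rewrite KH2.
    by move=> Uk; apply/pH; rewrite KH2.
  done.
split.
- move=> C D GC GD.
  have [[U [clU eC]] npC] := hfull _ GC.
  have [[U' [clU' eD]] npD] := hfull _ GD.
  case: (pselect (C = D)) => [<-|CD].
    by exists 0%N => //; exists (fun _ => C); split.
  have [x1 [x2 [x12 Ux1 Ux2]]] : exists x y, [/\ x <> y, U x & U y].
    by apply: npC; rewrite eC; left.
  have [y1 [y2 [y12 nUy1 nUy2]]] : exists x y, [/\ x <> y, (~` U) x & (~` U) y].
    by apply: npC; rewrite eC; right.
  have [V [clV eDV nUV]] : exists V, [/\ clopen V, D = cutof V & (U `&` V) !=set0].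
    case: (pselect ((U `&` U') !=set0)) => h.
      by exists U'; split.
    exists (~` U'); split.
    - exact: clopenC.
    - by rewrite cutofC.
    - by exists x1; split => // U'x1; apply: h; exists x1.
  have oP : open (U `&` V) by apply: openI; [exact: clU.1 | exact: clV.1].
  have [x [y [z [Px Py Pz [xy xz yz]]]]] := K_three cpsi K1 K2 oP nUV.
  have [A [clA Ax nAz]] := K_zd cphi K1 xz.
  have [B [clB By nBz]] := K_zd cphi K1 yz.
  pose W := (A `|` B) `&` (U `&` V).
  have clW : clopen W by apply: clopenI; [exact: clopenU | exact: clopenI].
  have WP : W `<=` U `&` V by move=> p [].
  have Wx : W x by split => //; left.
  have Wy : W y by split => //; right.
  have nWz : ~ W z by case=> [[]].
  have nWy1 : (~` W) y1 by move=> Wy1; apply: nUy1; exact: (WP _ Wy1).1.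
  have nWy2 : (~` W) y2 by move=> Wy2; apply: nUy2; exact: (WP _ Wy2).1.
  have GW : G (cutof W) := allG W clW (ex_intro _ x Wx) (ex_intro _ y1 nWy1).
  have [a1 a2] := @adj_sub _ U W (fun p Wp => (WP p Wp).1) (ex_intro _ x Wx)
    (ex_intro _ z (conj Pz.1 nWz)).
  have [b1 b2] := @adj_sub _ V W (fun p Wp => (WP p Wp).2) (ex_intro _ x Wx)
    (ex_intro _ z (conj Pz.2 nWz)).
  exists 2%N => //.
  exists (fun i => if i == 0%N then C else if i == 1%N then cutof W else D).
  split => //.
  + by move=> [|[|[|i]]].
  + move=> [|[|i]] //= _.
    * by rewrite eC; exact: a1.
    * by rewrite eDV; exact: b2.
- pose s (a b : bool) : cantor_space :=
    fun n => if n is 0%N then a else if n is 1%N then b else false.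
  pose MK : set K := phi @^-1` [set x | x 1%N = true].
  have clMK : clopen MK.
    apply: preimage_clopen => //.
    have -> : [set x : cantor_space | x 1%N = true] =
       (proj 1%N : cantor_space -> bool) @^-1` [set true] by [].
    apply: preimage_clopen; last exact: proj_continuous.
    by split; [exact: discrete_open | exact: discrete_closed].
  have clLK : clopen (LKof phi) by apply: preimage_clopen => //; exact: Lc_clopen.
  have Lp a b : LKof phi (psi (s a b)) <-> a = true by rewrite /LKof /Lc /= K2.
  have Mp a b : MK (psi (s a b)) <-> b = true by rewrite /MK /= K2.
  have GL : G (cutof (LKof phi)).
    apply: allG => //; first by exists (psi (s true true)); apply/Lp.
    by exists (psi (s false true)) => /Lp.
  have GM : G (cutof MK).
    apply: allG => //; first by exists (psi (s true true)); apply/Mp.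
    by exists (psi (s true false)) => /Mp.
  have cr : cross (cutof (LKof phi)) (cutof MK).
    move=> W W' [->|->] [->|->].
    - by exists (psi (s true true)); split; [apply/Lp | apply/Mp].
    - by exists (psi (s true false)); split; [apply/Lp | move/Mp].
    - by exists (psi (s false true)); split; [move/Lp | apply/Mp].
    - by exists (psi (s false false)); split; [move/Lp | move/Mp].
  exists (cutof (LKof phi)), (cutof MK); split => //.
  case=> k; case: k => [|[|k]] // _ [s0 [h0 h1 _ hadj]].
  + have e : cutof (LKof phi) = cutof MK by rewrite -h0 -h1.
    move: cr; rewrite -e => cr'.
    have [p [Lp' nLp']] := cr' (LKof phi) (~` LKof phi) (or_introl erefl) (or_intror erefl).
    exact: nLp' Lp'.
  + have := (hadj 0%N erefl).2; rewrite h0 h1; exact.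
Qed.
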